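(* Let $\mathcal{M}$ be a finite set of at least two pairwise distinct finite state machines with outputs, all over the same input alphabet $\Sigma$ and output alphabet $\Gamma$, and let $M_{\mathrm{trg}} \in \mathcal{M}$ be a target machine. Let $V$ be a verifier for the Remote Software Identification problem (defined in the context) which is RSI-correct and RSI-$\varepsilon_0$-sound. Then there exists a verifier $V'$ which is likewise RSI-correct and RSI-$\varepsilon_0$-sound and which behaves exactly like $V$ except that it never submits to the challenge machine any non-distinguishing sequence that $V$ would submit; i.e., every input sequence that $V'$ sends to the challenge machine lies in $\mathsf{DS}(\mathcal{M})$.
   Context: A finite state machine with outputs (FSM) is a tuple $M=(\mathcal{Z}, z_0, \Sigma, \Gamma, \delta, \omega)$ with state set $\mathcal{Z}$, start state $z_0\in\mathcal{Z}$, finite input alphabet $\Sigma$, finite output alphabet $\Gamma$, transition function $\delta:\mathcal{Z}\times\Sigma\to\mathcal{Z}$ and output function $\omega:\mathcal{Z}\times\Sigma\to\Gamma$. For a state $z$ and a sequence $\vec\sigma=(\sigma_1,\dots,\sigma_n)\in\Sigma^n$, $\omega(z,\vec\sigma)=(\gamma_1,\dots,\gamma_n)$ where $z_1=z$, $z_{i+1}=\delta(z_i,\sigma_i)$ and $\gamma_j=\omega(z_j,\sigma_j)$; write $\omega_M(\vec\sigma):=\omega_M(z_0,\vec\sigma)$ for the output function of $M$ started in its start state. A sequence $\vec\sigma\in\Sigma^*$ is a distinguishing sequence with respect to $\mathcal{M}$ if there exist $M,M'\in\mathcal{M}$ with $\omega_M(\vec\sigma)\neq\omega_{M'}(\vec\sigma)$;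 $\mathsf{DS}(\mathcal{M})\subseteq\Sigma^*$ denotes the set of all distinguishing sequences, and a sequence not in $\mathsf{DS}(\mathcal{M})$ is called non-distinguishing. Remote Software Identification (RSI) setting: a prover selects a source machine $M_{\mathrm{src}}\in\mathcal{M}$ and gives the verifier remote access to a challenge machine $M_{\mathrm{chl}}$, here with $M_{\mathrm{chl}}=M_{\mathrm{src}}$. The verifier knows the full specifications of all machines in $\mathcal{M}$ (and $M_{\mathrm{trg}}$), but can interact with $M_{\mathrm{chl}}$ only by sending input sequences $\vec\sigma\in\Sigma^*$ and receiving the corresponding outputs, and may reset $M_{\mathrm{chl}}$ to its start state. At the end the verifier outputs a decision $d\in\{\texttt{true},\texttt{false}\}$. The verifier is RSI-correct if $\Pr[d=\texttt{true}\mid M_{\mathrm{src}}=M_{\mathrm{trg}}]=1$, and RSI-$\varepsilon_0$-sound if $\Pr[d=\texttt{true}\mid M_{\mathrm{src}}\neq M_{\mathrm{trg}}]\le\varepsilon_0$. *)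

(* Defs.v *)
From mathcomp Require Import all_boot all_order all_algebra.
From mathcomp Require Import reals.
Set Implicit Arguments. Unset Strict Implicit. Unset Printing Implicit Defensive.
Import Order.TTheory GRing.Theory Num.Theory.
Local Open Scope ring_scope.

Record fsm (Sigma Gamma : finType) := FSM {
  fsm_state : finType;
  fsm_start : fsm_state;
  fsm_delta : fsm_state -> Sigma -> fsm_state;
  fsm_out   : fsm_state -> Sigma -> Gamma }.

Fixpoint out_from (Sigma Gamma : finType) (M : fsm Sigma Gamma)
    (z : fsm_state M) (s : seq Sigma) : seq Gamma :=
  match s with
  | [::] => [::]
  | a :: s' => fsm_out z a :: out_from (fsm_delta z a) s'
  end.

Definition outM (Sigma Gamma : finType) (M : fsm Sigma Gamma) (s : seq Sigma)
  : seq Gamma := out_from (fsm_start M) s.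

(* The finite set of machines is given as an injective family M : I -> fsm.
   DS(M): sequences on which two machines of the family differ. *)
Definition DS (Sigma Gamma I : finType) (M : I -> fsm Sigma Gamma)
    (s : seq Sigma) : bool :=
  [exists i : I, exists j : I, outM (M i) s != outM (M j) s].

(* A (randomized, adaptive) verifier with random tape r : Omega.
   Each round, given the history of (query, answer) pairs, it either submits
   a new input sequence to the challenge machine (after a reset, i.e. from the
   start state) or stops; at most v_rounds queries are made; then it decides. *)
Record verifier (Sigma Gamma Omega : finType) := Verifier {
  v_rounds : nat;
  v_next   : Omega -> seq (seq Sigma * seq Gamma) -> option (seq Sigma);
  v_decide : Omega -> seq (seq Sigma * seq Gamma) -> bool }.

Fixpoint run_aux (Sigma Gamma Omega : finType) (V : verifier Sigma Gamma Omega)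
    (M : fsm Sigma Gamma) (r : Omega) (fuel : nat)
    (hist : seq (seq Sigma * seq Gamma)) : seq (seq Sigma) * bool :=
  match fuel with
  | 0 => ([::], v_decide V r hist)
  | n.+1 =>
    match v_next V r hist with
    | None => ([::], v_decide V r hist)
    | Some s =>
        let res := run_aux V M r n (rcons hist (s, outM M s)) in
        (s :: res.1, res.2)
    end
  end.

Definition run (Sigma Gamma Omega : finType) (V : verifier Sigma Gamma Omega)
    (M : fsm Sigma Gamma) (r : Omega) : seq (seq Sigma) * bool :=
  run_aux V M r (v_rounds V) [::].

Definition queries (Sigma Gamma Omega : finType) (V : verifier Sigma Gamma Omega)
    (M : fsm Sigma Gamma) (r : Omega) : seq (seq Sigma) := (run V M r).1.

Definition decision (Sigma Gamma Omega : finType) (V : verifier Sigma Gamma Omega)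
    (M : fsm Sigma Gamma) (r : Omega) : bool := (run V M r).2.

Definition is_distr (R : realType) (Omega : finType) (P : Omega -> R) : Prop :=
  (forall r, 0 <= P r) /\ \sum_(r : Omega) P r = 1.

Definition Pr_accept (R : realType) (Sigma Gamma Omega : finType)
    (P : Omega -> R) (V : verifier Sigma Gamma Omega) (M : fsm Sigma Gamma) : R :=
  \sum_(r : Omega | decision V M r) P r.

Definition RSI_correct (R : realType) (Sigma Gamma Omega : finType)
    (P : Omega -> R) (V : verifier Sigma Gamma Omega) (Mtrg : fsm Sigma Gamma)
  : Prop := Pr_accept P V Mtrg = 1.

(* M_chl = M_src = M i for any i with M i <> M trg (i.e. i <> trg). *)
Definition RSI_sound (R : realType) (Sigma Gamma Omega I : finType)
    (P : Omega -> R) (V : verifier Sigma Gamma Omega) (M : I -> fsm Sigma Gamma)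
    (trg : I) (eps0 : R) : Prop :=
  forall i : I, i != trg -> Pr_accept P V (M i) <= eps0.

(* Main.v *)
Require Import Defs.
From mathcomp Require Import all_boot all_order all_algebra.
From mathcomp Require Import reals.
Import Order.TTheory GRing.Theory Num.Theory.
Local Open Scope ring_scope.

Section Sim.
Variables (Sigma Gamma I Omega : finType).
Variables (M : I -> fsm Sigma Gamma) (trg : I) (V : verifier Sigma Gamma Omega).

Fixpoint sim (r : Omega) (fuel : nat) (h hs : seq (seq Sigma * seq Gamma))
  : option (seq Sigma) * seq (seq Sigma * seq Gamma) :=
  match fuel with
  | 0 => (None, h)
  | n.+1 =>
    match v_next V r h with
    | None => (None, h)
    | Some s =>
      if DS M s then
        match hs with
        | [::] => (Some s, h)
        | (_, a) :: hs' => sim r n (rcons h (s, a)) hs'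
        end
      else sim r n (rcons h (s, outM (M trg) s)) hs
    end
  end.

Definition V' : verifier Sigma Gamma Omega :=
  Verifier (v_rounds V)
    (fun r h' => (sim r (v_rounds V) [::] h').1)
    (fun r h' => v_decide V r (sim r (v_rounds V) [::] h').2).

Lemma notDS_eq s i : ~~ DS M s -> outM (M i) s = outM (M trg) s.
Proof.
rewrite /DS negb_exists => /forallP /(_ i).
by rewrite negb_exists => /forallP /(_ trg); rewrite negbK => /eqP.
Qed.

Lemma sim_run i r f : forall f' h h',
  (f <= f')%N ->
  (forall hs, sim r (v_rounds V) [::] (h' ++ hs) = sim r f h hs) ->
  run_aux V' (M i) r f' h' =
  ([seq s <- (run_aux V (M i) r f h).1 | DS M s], (run_aux V (M i) r f h).2).
Proof.
elim: f => [|n IH] f' h h' Hf Hc.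
  have E := Hc [::]; rewrite cats0 /= in E.
  by case: f' Hf => [|m] _ /=; rewrite ?E //=.
have E := Hc [::]; rewrite cats0 /= in E.
rewrite [run_aux V _ _ n.+1 _]/=.
case Hn: (v_next V r h) => [s|]; rewrite Hn in E.
- case Hd: (DS M s); rewrite Hd in E.
  + case: f' Hf => [|m] // Hf /=.
    rewrite E /=.
    rewrite (IH m (rcons h (s, outM (M i) s)) (rcons h' (s, outM (M i) s))) //.
      by rewrite /= Hd.
    move=> hs; rewrite -cats1 -catA cat1s Hc /= Hn Hd //.
  + rewrite (IH f' (rcons h (s, outM (M trg) s)) h') //=.
    * by rewrite Hd notDS_eq // Hd.
    * exact: ltnW.
    * by move=> hs; rewrite Hc /= Hn Hd.
- by case: f' Hf => [|m] _ /=; rewrite E.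
Qed.

End Sim.

Theorem theorem1 (Sigma Gamma I Omega : finType) (R : realType)
    (M : I -> fsm Sigma Gamma) (trg : I) (P : Omega -> R) (eps0 : R)
    (V : verifier Sigma Gamma Omega) :
  injective M -> (1 < #|I|)%N -> is_distr P ->
  RSI_correct P V (M trg) -> RSI_sound P V M trg eps0 ->
  exists V' : verifier Sigma Gamma Omega,
    [/\ RSI_correct P V' (M trg),
        RSI_sound P V' M trg eps0,
        (forall (i : I) (r : Omega),
           decision V' (M i) r = decision V (M i) r /\
           queries V' (M i) r = [seq s <- queries V (M i) r | DS M s]) &
        (forall (i : I) (r : Omega) (s : seq Sigma),
           s \in queries V' (M i) r -> DS M s)].
Proof.
move=> _ _ _ Hc Hs.
have key : forall i r, run (@V' _ _ _ _ M trg V) (M i) r =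
  ([seq s <- (run V (M i) r).1 | DS M s], (run V (M i) r).2).
  by move=> i r; rewrite /run; apply: sim_run.
have Hdec : forall i r, decision (@V' _ _ _ _ M trg V) (M i) r = decision V (M i) r.
  by move=> i r; rewrite /decision key.
have Hpr : forall i, Pr_accept P (@V' _ _ _ _ M trg V) (M i) = Pr_accept P V (M i).
  by move=> i; apply: eq_bigl => r; rewrite Hdec.
exists (@V' _ _ _ _ M trg V); split.
- by rewrite /RSI_correct Hpr.
- by move=> i Hi; rewrite Hpr; apply: Hs.
- by move=> i r; split; [apply: Hdec | rewrite /queries key].
- by move=> i r s; rewrite /queries key mem_filter => /andP[].
Qed.
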